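(* Let $Q=\{0,1,\dots,q-1\}$. Let $M\subseteq Q^5$ be an MDS code of length $5$ with code distance $4$, and let $M'\subseteq Q^4$ be the projection of $M$ onto some $4$ of its $5$ coordinates. Then there exists an MDS code $C\subseteq Q^4$ of length $4$ with code distance $2$ such that $M'\subseteq C$.
   Context: Let $Q=\{0,\dots,q-1\}$. A $t$-dimensional face of $Q^d$ is a set obtained by fixing the values of $d-t$ of the coordinates and letting the remaining $t$ coordinates range over $Q$. A subset $M\subseteq Q^d$ is an MDS code of length $d$ and code distance $t+1$ (written $MDS(t+1,d,q)$) if $|M\cap\Gamma|=1$ for every $t$-dimensional face $\Gamma$ of $Q^d$. The projection of $M$ onto a set $S$ of coordinates is the set of restrictions of the elements of $M$ to the coordinates in $S$. *)

(* Defs.v *)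
From mathcomp Require Import all_boot.
Set Implicit Arguments. Unset Strict Implicit. Unset Printing Implicit Defensive.

Definition word (d q : nat) := {ffun 'I_d -> 'I_q}.

Definition face (d q : nat) (S : {set 'I_d}) (a : word d q) : {set word d q} :=
  [set x : word d q | [forall i in S, x i == a i]].

(* M is an MDS(t+1, d, q) code: |M ∩ Γ| = 1 for every t-dimensional face Γ,
   i.e. every face obtained by fixing d - t coordinates. Here dist = t + 1. *)
Definition is_MDS (dist d q : nat) (M : {set word d q}) : Prop :=
  forall (S : {set 'I_d}) (a : word d q),
    #|S| = d - dist.-1 -> #|M :&: face S a| = 1.

Definition delete_coord (d q : nat) (j : 'I_d.+1) (x : word d.+1 q) : word d q :=
  [ffun i : 'I_d => x (lift j i)].

Definition project (d q : nat) (j : 'I_d.+1) (M : {set word d.+1 q}) : {set word d q} :=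
  [set delete_coord j x | x in M].

(* Main.v *)
Require Import Defs.
From mathcomp Require Import all_boot.
Set Implicit Arguments. Unset Strict Implicit. Unset Printing Implicit Defensive.

Section S.
Variables (q : nat) (M : {set word 5 q}) (HM : @is_MDS 4 5 q M).

Lemma pair_uniq (u v : 'I_5) c d : u != v -> c \in M -> d \in M ->
  c u = d u -> c v = d v -> c = d.
Proof.
move=> huv cM dM eu ev; apply/eqP; apply/negPn/negP => ncd.
have H2 : #|[set u; v]| = 2 by rewrite cards2 huv.
have H := HM (S:=[set u; v]) c H2.
have : #|[set c; d]| <= #|M :&: face [set u; v] c|.
  apply: subset_leq_card; apply/subsetP => x; rewrite !inE.
  case/orP=> /eqP ->; rewrite ?cM ?dM /=; apply/forallP => i; apply/implyP;
  rewrite !inE // => /orP [] /eqP -> //; by rewrite ?eu ?ev.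
by rewrite H cards2 ncd.
Qed.

Lemma pair_ex (u v : 'I_5) al be : u != v -> exists c, [/\ c \in M, c u = al & c v = be].
Proof.
move=> huv.
have H2 : #|[set u; v]| = 2 by rewrite cards2 huv.
have H := HM (S:=[set u; v]) [ffun i => if i == u then al else be] H2.
have : 0 < #|M :&: face [set u; v] [ffun i => if i == u then al else be]| by rewrite H.
case/card_gt0P => c; rewrite !inE => /andP [cM /forallP F]; exists c; split => //.
  by move: (F u); rewrite !inE eqxx /= ffunE eqxx => /eqP.
move: (F v); rewrite !inE eqxx orbT /= ffunE.
by rewrite [v == u]eq_sym (negbTE huv) => /eqP.
Qed.

Variable j : 'I_5.
Definition Rel (u v x z : 'I_5) (a b e f : 'I_q) :=
  exists c c', [/\ c \in M, c' \in M, [/\ c u = a, c v = b, c' x = e & c' z = f] & c j = c' j].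

Lemma Rel_ex u v x z : x != z -> v != j -> forall b e f,
  exists al, Rel u v x z al b e f /\ forall al', Rel u v x z al' b e f -> al' = al.
Proof.
move=> hxz hvj b e f.
have [c' [c'M c'x c'z]] := pair_ex e f hxz.
have [c [cM cv cj]] := pair_ex b (c' j) hvj.
exists (c u); split; first by exists c, c'.
move=> al' [d [d' [dM d'M [du dv d'x d'z] dj]]].
have ed' : d' = c' by apply: (pair_uniq hxz) => //; rewrite ?d'x ?d'z.
have ed : d = c by apply: (pair_uniq hvj) => //; rewrite ?dv ?cv // dj ed' cj.
by rewrite -du ed.
Qed.
End S.

Lemma face_gen q (C : {set word 4 q}) (k k1 k2 k3 : 'I_4) (a : word 4 q)
  (P : 'I_q -> 'I_q -> 'I_q -> 'I_q -> Prop) :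
  k1 != k -> k2 != k -> k3 != k ->

  (forall y, y \in C <-> P (y k) (y k1) (y k2) (y k3)) ->
  (forall b e f, exists al, P al b e f /\ forall al', P al' b e f -> al' = al) ->
  #|C :&: face (~: [set k]) a| = 1.
Proof.
move=> h1 h2 h3 HC HP.
have [al [Pal Pu]] := HP (a k1) (a k2) (a k3).
apply/eqP/cards1P; exists [ffun i => if i == k then al else a i].
apply/setP => w; rewrite !inE; apply/andP/eqP.
- move=> [/HC wC /forallP F].
  have Fi : forall i, i != k -> w i = a i.
    by move=> i ik; move: (F i); rewrite !inE ik /= => /eqP.
  move: wC; rewrite (Fi k1) // (Fi k2) // (Fi k3) // => /Pu wk.
  apply/ffunP => i; rewrite ffunE; case: eqP => [->|/eqP ik] //; exact: Fi.
- move=> ->; split.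
    by apply/HC; rewrite !ffunE eqxx (negbTE h1) (negbTE h2) (negbTE h3).
  by apply/forallP => i; rewrite !inE ffunE; apply/implyP => /negbTE ->.
Qed.

Definition o0 : 'I_4 := @Ordinal 4 0 isT.
Definition o1 : 'I_4 := @Ordinal 4 1 isT.
Definition o2 : 'I_4 := @Ordinal 4 2 isT.
Definition o3 : 'I_4 := @Ordinal 4 3 isT.

Lemma Rel_swap1 q (M : {set word 5 q}) j u v x z a b e f :
  Rel M j u v x z a b e f <-> Rel M j v u x z b a e f.
Proof. by split=> -[c [c' [? ? [? ? ? ?] ?]]]; exists c, c'. Qed.

Lemma Rel_swap2 q (M : {set word 5 q}) j u v x z a b e f :
  Rel M j u v x z a b e f <-> Rel M j x z u v e f a b.
Proof. by split=> -[c [c' [? ? [? ? ? ?] ?]]]; exists c', c. Qed.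

Theorem proposition2 (q : nat) (M : {set word 5 q}) (j : 'I_5) :
  @is_MDS 4 5 q M ->
  exists C : {set word 4 q}, @is_MDS 2 4 q C /\ @project 4 q j M \subset C.
Proof.
move=> HM.
pose p := lift j.
pose C := [set y : word 4 q | [exists c, [exists c', [&& c \in M, c' \in M,
   c (p o0) == y o0, c (p o1) == y o1 & [&& c' (p o2) == y o2, c' (p o3) == y o3
   & c j == c' j]]]]].
have inC : forall y, y \in C <-> Rel M j (p o0) (p o1) (p o2) (p o3) (y o0) (y o1) (y o2) (y o3).
  move=> y; rewrite inE; split.
    case/existsP => c /existsP [c' /and5P [cM c'M /eqP h0 /eqP h1 /and3P [/eqP h2 /eqP h3 /eqP hj]]].
    by exists c, c'.
  move=> [c [c' [cM c'M [h0 h1 h2 h3] hj]]]; apply/existsP; exists c; apply/existsP; exists c'.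
  by rewrite cM c'M h0 h1 h2 h3 hj !eqxx.
have pn : forall i i', i != i' -> p i != p i'.
  by move=> i i' ii'; apply: contra ii' => /eqP /lift_inj ->.
have pj : forall i, p i != j by move=> i; rewrite eq_sym neq_lift.
exists C; split; last first.
  apply/subsetP => x /imsetP [c cM ->]; apply/inC; exists c, c; split => //.
  by split; rewrite /delete_coord ffunE.
move=> S a hS.
have : #|~: S| = 1 by move: (cardsC S); rewrite hS card_ord => /eqP; rewrite -[4]/(3+1) eqn_add2l => /eqP.
move=> /eqP /cards1P [k hk].
have -> : S = ~: [set k] by rewrite -hk setCK.
case: k {hk} => [[|[|[|[|n]]]] Hk] //.
- have -> : Ordinal Hk = o0 by apply: val_inj.
  apply: (@face_gen q C o0 o1 o2 o3 a (Rel M j (p o0) (p o1) (p o2) (p o3))) => //.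
  by apply: (Rel_ex HM); [apply: pn | apply: pj].
- have -> : Ordinal Hk = o1 by apply: val_inj.
  apply: (@face_gen q C o1 o0 o2 o3 a (Rel M j (p o1) (p o0) (p o2) (p o3))) => //.
    by move=> y; apply: iff_trans (inC y) _; apply: Rel_swap1.
  by apply: (Rel_ex HM); [apply: pn | apply: pj].
- have -> : Ordinal Hk = o2 by apply: val_inj.
  apply: (@face_gen q C o2 o3 o0 o1 a (Rel M j (p o2) (p o3) (p o0) (p o1))) => //.
    by move=> y; apply: iff_trans (inC y) _; apply: Rel_swap2.
  by apply: (Rel_ex HM); [apply: pn | apply: pj].
- have -> : Ordinal Hk = o3 by apply: val_inj.
  apply: (@face_gen q C o3 o2 o0 o1 a (Rel M j (p o3) (p o2) (p o0) (p o1))) => //.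
    by move=> y; apply: iff_trans (inC y) _; apply: iff_trans (Rel_swap2 M j (p o0) (p o1) (p o2) (p o3) (y o0) (y o1) (y o2) (y o3)) _; apply: Rel_swap1.
  by apply: (Rel_ex HM); [apply: pn | apply: pj].
Qed.
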